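(* Let $S$ and $Z$ be finite nonempty alphabets with $\#Z\le \#S$, let $\tau:S\to Z$ be surjective, and let $(\Sigma,\sigma_\tau)$ be the associated full zip shift space. Then the set of periodic points of $\sigma_\tau$ (points $p\in\Sigma$ with $\sigma_\tau^n(p)=p$ for some $n\ge 1$) is dense in $\Sigma$.
   Context: The zip shift space is $\Sigma=\Sigma_{Z,S}$, the set of bi-infinite sequences $x=(x_i)_{i\in\mathbb{Z}}$ with $x_i\in S$ for all $i\ge 0$ and $x_i\in Z$ for all $i<0$. It carries the metric $d(x,y)=2^{-M(x,y)}$, where $M(x,y)=\min\{|i| : x_i\neq y_i\}$ (and $d(x,x)=0$); cylinder sets $[s_i\cdots s_{i+\ell}]=\{x\in\Sigma: x_j=s_j,\ i\le j\le i+\ell\}$ form a basis of the topology. The (full) zip shift map $\sigma_\tau:\Sigma\to\Sigma$ is defined by $(\sigma_\tau x)_i=x_{i+1}$ for all $i\neq -1$ and $(\sigma_\tau x)_{-1}=\tau(x_0)$; i.e. $\sigma_\tau(\cdots x_{-2}x_{-1}.x_0x_1x_2\cdots)=(\cdots x_{-2}x_{-1}\tau(x_0).x_1x_2\cdots)$. *)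

(* Defs.v *)
From mathcomp Require Import all_boot.
From Stdlib Require Import Reals ClassicalEpsilon.
Set Implicit Arguments. Unset Strict Implicit. Unset Printing Implicit Defensive.

(* A point x = (x_i)_{i in Z} of the zip shift space Sigma_{Z,S}:
   zneg k = x_{-(k+1)} in Z (k : nat),  spos k = x_k in S (k : nat). *)
Record zpoint (Z S : Type) := ZPoint { zneg : nat -> Z ; spos : nat -> S }.

Definition agree_upto (Z S : Type) (x y : zpoint Z S) (m : nat) : Prop :=
  (forall k, (k < m)%N -> spos x k = spos y k) /\
  (forall k, (k.+1 < m)%N -> zneg x k = zneg y k).

Definition differ_at (Z S : Type) (x y : zpoint Z S) (m : nat) : Prop :=
  spos x m <> spos y m \/ (0 < m)%N /\ zneg x m.-1 <> zneg y m.-1.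

Definition is_M (Z S : Type) (x y : zpoint Z S) (m : nat) : Prop :=
  agree_upto x y m /\ differ_at x y m.

Definition zdist (Z S : Type) (x y : zpoint Z S) : R :=
  match excluded_middle_informative (exists m, is_M x y m) with
  | left h => (/ 2 ^ (proj1_sig (constructive_indefinite_description _ h)))%R
  | right _ => 0%R
  end.

Definition zip_shift (Z S : Type) (tau : S -> Z) (x : zpoint Z S) : zpoint Z S :=
  ZPoint (fun k => match k with 0 => tau (spos x 0) | k'.+1 => zneg x k' end)
         (fun k => spos x k.+1).

Definition periodic_pt (Z S : Type) (tau : S -> Z) (p : zpoint Z S) : Prop :=
  exists n, (1 <= n)%N /\ iter n (zip_shift tau) p = p.

(* Main.v *)
Require Import Defs.
From mathcomp Require Import all_boot.
From Stdlib Require Import Reals Lra FunctionalExtensionality ClassicalEpsilon.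
From mathcomp Require Import zify.

Lemma iter_shift (Z S : Type) (tau : S -> Z) (x : zpoint Z S) n :
  (forall k, spos (iter n (zip_shift tau) x) k = spos x (k + n)) /\
  (forall k, zneg (iter n (zip_shift tau) x) k =
     if (k < n)%N then tau (spos x (n - 1 - k)) else zneg x (k - n)).
Proof.
elim: n => [|n [IH1 IH2]] /=.
  by split=> k; rewrite ?addn0 ?subn0.
split=> k /=; first by rewrite IH1 addSnnS.
case: k => [|k]; first by rewrite IH1 add0n /= subn1 subn0.
rewrite IH2 ltnS; case: ifP => _;
  [congr (tau (spos x _)) | congr (zneg x _)]; lia.
Qed.

Lemma zdist_le (Z S : Type) (x p : zpoint Z S) N :
  agree_upto x p N -> (zdist x p <= / 2 ^ N)%R.
Proof.
move=> [A1 A2]; rewrite /zdist.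
case: excluded_middle_informative => [h|_]; last first.
  by apply: Rlt_le; apply: Rinv_0_lt_compat; apply: pow_lt; lra.
case: (constructive_indefinite_description _ h) => m [_ D] /=.
have Nm : (N <= m)%N.
  rewrite leqNgt; apply/negP=> mN; case: D => [D|[m0 D]].
    by apply: D; apply: A1.
  by apply: D; apply: A2; rewrite prednK.
apply: Rinv_le_contravar; first by apply: pow_lt; lra.
by apply: Rle_pow; [lra | apply/leP].
Qed.

Theorem theorem1 (S Z : finType) (tau : S -> Z) :
  (0 < #|S|)%N -> (0 < #|Z|)%N -> (#|Z| <= #|S|)%N ->
  (forall z : Z, exists s : S, tau s = z) ->
  forall (x : zpoint Z S) (eps : R), (0 < eps)%R ->
    exists p : zpoint Z S, periodic_pt tau p /\ (zdist x p < eps)%R.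
Proof.
move=> _ _ _ hs x eps he.
have hs' : forall z, exists s, tau s == z.
  by move=> z; case: (hs z) => s <-; exists s.
pose g z := xchoose (hs' z).
have gK : forall z, tau (g z) = z by move=> z; apply/eqP; apply: (xchooseP (hs' z)).
have [N HN] : exists N, (/ 2 ^ N < eps)%R.
  have : (Rabs (/2) < 1)%R by rewrite Rabs_pos_eq; lra.
  move=> /(pow_lt_1_zero) /(_ _ he) [N HN]; exists N.
  have := HN N (le_n N); rewrite pow_inv Rabs_pos_eq //.
  by apply: Rlt_le; apply: Rinv_0_lt_compat; apply: pow_lt; lra.
pose n := (N + N).+1.
pose w j := if (j < N)%N then spos x j else g (zneg x (n - 1 - j)).
pose p := ZPoint (fun k => tau (w (n - 1 - (k %% n)))) (fun k => w (k %% n)).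
exists p; split.
  exists n; split => //.
  have [I1 I2] := @iter_shift _ _ tau p n.
  case E : (iter n (zip_shift tau) p) => [zn sp].
  rewrite /p; f_equal; apply: functional_extensionality => k.
  - have := I2 k; rewrite E /= => ->.
    case: ifP => kn /=; first by rewrite !modn_small //; lia.
    congr (tau (w (_ - _))).
    have -> : k = (k - n) + n by rewrite subnK // leqNgt kn.
    by rewrite addnK modnDr.
  - by have := I1 k; rewrite E /= => ->; rewrite modnDr.
apply: (Rle_lt_trans _ _ _ _ HN); apply: (@zdist_le _ _ x p N); split => k kN /=.
  rewrite modn_small /w ?kN //; rewrite /n; lia.
rewrite modn_small /w; last by rewrite /n; lia.
have -> : (n - 1 - k < N)%N = false by rewrite /n; lia.
by rewrite gK; congr (zneg x _); rewrite /n; lia.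
Qed.
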